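(* Let $X$ be a gamble and $\varepsilon>0$. (a) Let $\underline{P}$ be defined on $\mathcal{D}_0^{\le}(X)=\{I_{(X\le-\varepsilon)}, -X^2\}$, and let $\mathcal{M}_0^{\le}(X)$ be the set of dF-coherent previsions $P$ on $\mathcal{D}_0^{\le}(X)\cup\{X\}$ with $P\ge\underline{P}$ on $\mathcal{D}_0^{\le}(X)$ and $P(X)=0$. If $\mathcal{M}_0^{\le}(X)\neq\emptyset$, then $\underline{P}(X\le-\varepsilon)\le\frac{\overline{P}(X^2)}{\overline{P}(X^2)+\varepsilon^2}$. (b) Let $\underline{P}$ be defined on $\mathcal{D}_0^{\ge}(X)=\{I_{(X\ge\varepsilon)}, -X^2\}$, and let $\mathcal{M}_0^{\ge}(X)$ be the set of dF-coherent previsions $P$ on $\mathcal{D}_0^{\ge}(X)\cup\{X\}$ with $P\ge\underline{P}$ on $\mathcal{D}_0^{\ge}(X)$ and $P(X)=0$. If $\mathcal{M}_0^{\ge}(X)\neq\emptyset$, then $\underline{P}(X\ge\varepsilon)\le\frac{\overline{P}(X^2)}{\overline{P}(X^2)+\varepsilon^2}$. Here $\overline{P}(X^2)=-\underline{P}(-X^2)$.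
   Context: $\Pi$ is a partition of the sure event into pairwise disjoint non-impossible events; a gamble is a bounded map $X:\Pi\to\mathbb{R}$; $(X\le c)$, $(X\ge c)$ are events with indicators $I_{(X\le c)}$, $I_{(X\ge c)}$, and $\underline{P}(X\le c)=\underline{P}(I_{(X\le c)})$. A lower prevision is just a real-valued map on a set of gambles; no consistency is assumed beyond the stated hypothesis. A map $P:\mathcal{D}\to\mathbb{R}$ is a dF-coherent prevision iff for all $n\in\mathbb{N}$, $s_0,\dots,s_n\in\mathbb{R}$, $X_0,\dots,X_n\in\mathcal{D}$, $\sup\sum_{i=0}^n s_i(X_i-P(X_i))\ge 0$. *)

(* Defs.v *)
From mathcomp Require Import all_boot all_order all_algebra.
From mathcomp Require Import all_classical all_reals.
Set Implicit Arguments. Unset Strict Implicit. Unset Printing Implicit Defensive.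
Import Order.TTheory GRing.Theory Num.Theory.
Local Open Scope classical_set_scope.
Local Open Scope ring_scope.

Section Gambles.
Variables (R : realType) (Pi : Type).

Definition is_gamble (X : Pi -> R) : Prop :=
  exists M : R, forall w, `|X w| <= M.

Definition ind_le (X : Pi -> R) (c : R) : Pi -> R :=
  fun w => if X w <= c then 1 else 0.
Definition ind_ge (X : Pi -> R) (c : R) : Pi -> R :=
  fun w => if c <= X w then 1 else 0.

(* dF-coherence of a prevision P on the set of gambles D
   (P is a map on all functions, only its values on D matter) *)
Definition dF_coherent (D : set (Pi -> R)) (P : (Pi -> R) -> R) : Prop :=
  forall (n : nat) (s : 'I_n.+1 -> R) (Xs : 'I_n.+1 -> (Pi -> R)),
    (forall i, D (Xs i)) ->
    0 <= sup [set (\sum_(i < n.+1) s i * (Xs i w - P (Xs i)))%R | w in [set: Pi]].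

Definition M0 (X : Pi -> R) (D0 : set (Pi -> R)) (lowP : (Pi -> R) -> R)
  : set ((Pi -> R) -> R) :=
  [set P | dF_coherent (D0 `|` [set X]) P /\
           (forall Y, D0 Y -> lowP Y <= P Y) /\ P X = 0].

Definition sqg (X : Pi -> R) : Pi -> R := fun w => - (X w ^+ 2).

(* upper prevision of X^2 by conjugacy *)
Definition upP_sq (lowP : (Pi -> R) -> R) (X : Pi -> R) : R := - lowP (sqg X).

End Gambles.

(* Main.v *)
Require Import Defs.
From mathcomp Require Import all_boot all_order all_algebra.
From mathcomp Require Import all_classical all_reals.
From mathcomp Require Import ring lra.
Import Order.TTheory GRing.Theory Num.Theory.
Local Open Scope classical_set_scope.
Local Open Scope ring_scope.

Lemma sup_img_le {R : realType} {Pi : Type} (w0 : Pi) (f : Pi -> R) (B : R) :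
  (forall w, f w <= B) -> sup [set f w | w in [set: Pi]] <= B.
Proof.
move=> H; apply: ge_sup; first by exists (f w0), w0.
by move=> _ [w _ <-].
Qed.

Lemma v_ge0 {R : realType} {Pi : Type} (w0 : Pi) (D : set (Pi -> R)) (P : (Pi -> R) -> R) (X : Pi -> R) :
  D (sqg X) -> dF_coherent D P -> 0 <= - P (sqg X).
Proof.
move=> hS hP.
have := hP 0%N (fun _ => 1) (fun _ => sqg X) (fun _ => hS).
move=> H; apply: (le_trans H); apply: sup_img_le => // w.
rewrite big_ord_recl big_ord0 addr0 mul1r /sqg.
have := sqr_ge0 (X w); rewrite expr2; lra.
Qed.

Lemma core {R : realType} {Pi : Type} (w0 : Pi) (D : set (Pi -> R)) (P : (Pi -> R) -> R) (X Y : Pi -> R)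
  (k d : R) :
  D Y -> D (sqg X) -> D X -> dF_coherent D P -> P X = 0 ->
  (forall w, Y w <= k * (X w - d) ^+ 2) ->
  P Y <= k * (d ^+ 2 + - P (sqg X)).
Proof.
move=> hY hS hX hP hPX hYw.
pose s : 'I_3 -> R := fun i => match val i with 0%N => 1 | 1%N => k | _ => 2 * k * d end.
pose Xs : 'I_3 -> (Pi -> R) := fun i => match val i with 0%N => Y | 1%N => sqg X | _ => X end.
have hD : forall i, D (Xs i) by move=> [[|[|?]] ?].
suff: 0 <= k * d ^+ 2 - P Y + k * - P (sqg X) by lra.
apply: (le_trans (hP 2%N s Xs hD)); apply: sup_img_le => // w.
rewrite !big_ord_recl big_ord0 /= /s /Xs /= hPX /sqg.
have := hYw w; rewrite !expr2 => h.
nra.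
Qed.

Lemma alg_id {R : realType} (u e : R) : 0 < e -> 0 <= u ->
  ((u / e + e)^-1) ^+ 2 * ((u / e) ^+ 2 + u) = u / (u + e ^+ 2).
Proof.
move=> he hu.
have h1 : 0 < u + e ^+ 2 by have := exprn_gt0 2 he; lra.
have h2 : u / e + e = (u + e ^+ 2) / e by field; apply: lt0r_neq0.
rewrite h2; field; apply/andP; split; apply: lt0r_neq0 => //.
Qed.

Theorem proposition4 (R : realType) (Pi : Type) (w0 : Pi)
  (X : Pi -> R) (hX : is_gamble X) (eps : R) (heps : 0 < eps) :
  (forall lowP : (Pi -> R) -> R,
     M0 X [set ind_le X (- eps); sqg X] lowP !=set0 ->
     lowP (ind_le X (- eps)) <=
       upP_sq lowP X / (upP_sq lowP X + eps ^+ 2)) /\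
  (forall lowP : (Pi -> R) -> R,
     M0 X [set ind_ge X eps; sqg X] lowP !=set0 ->
     lowP (ind_ge X eps) <=
       upP_sq lowP X / (upP_sq lowP X + eps ^+ 2)).
Proof.
split=> lowP [P [hP [hdom hPX]]].
- set Y := ind_le X (- eps).
  have hY : ([set Y; sqg X] `|` [set X]) Y by left; left.
  have hS : ([set Y; sqg X] `|` [set X]) (sqg X) by left; right.
  have hXD : ([set Y; sqg X] `|` [set X]) X by right.
  have hv := v_ge0 w0 _ _ _ hS hP.
  have hlY := hdom Y (or_introl erefl).
  have hlS := hdom (sqg X) (or_intror erefl).
  rewrite /upP_sq.
  set u := - lowP (sqg X).
  have hu : - P (sqg X) <= u by rewrite /u; lra.
  set c := u / eps.
  have hc : 0 <= c by rewrite /c divr_ge0 //; lra.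
  have hce : 0 < c + eps by lra.
  pose k := (c + eps)^-1 ^+ 2.
  have hk : 0 <= k by rewrite /k sqr_ge0.
  have := core w0 _ _ _ _ k c hY hS hXD hP hPX.
  have Hw : forall w, Y w <= k * (X w - c) ^+ 2.
    move=> w; rewrite /Y /ind_le; case: ifP => h.
      move: h => /idP h.
      have e1 : k * (c + eps) ^+ 2 = 1.
        rewrite /k -exprMn mulVf ?expr1n //; apply: lt0r_neq0; lra.
      have e2 : (c + eps) ^+ 2 <= (X w - c) ^+ 2.
        rewrite !expr2; nra.
      rewrite -e1; exact: ler_wpM2l.
    by apply: mulr_ge0 => //; apply: sqr_ge0.
  move=> /(_ Hw) H.
  have Hk2 : k * (c ^+ 2 + u) = u / (u + eps ^+ 2).
    rewrite /k /c; apply: alg_id; lra.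
  have : k * (c ^+ 2 + - P (sqg X)) <= k * (c ^+ 2 + u) by apply: ler_wpM2l => //; lra.
  lra.
- set Y := ind_ge X eps.
  have hY : ([set Y; sqg X] `|` [set X]) Y by left; left.
  have hS : ([set Y; sqg X] `|` [set X]) (sqg X) by left; right.
  have hXD : ([set Y; sqg X] `|` [set X]) X by right.
  have hv := v_ge0 w0 _ _ _ hS hP.
  have hlY := hdom Y (or_introl erefl).
  have hlS := hdom (sqg X) (or_intror erefl).
  rewrite /upP_sq.
  set u := - lowP (sqg X).
  have hu : - P (sqg X) <= u by rewrite /u; lra.
  set c := u / eps.
  have hc : 0 <= c by rewrite /c divr_ge0 //; lra.
  have hce : 0 < c + eps by lra.
  pose k := (c + eps)^-1 ^+ 2.
  have hk : 0 <= k by rewrite /k sqr_ge0.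
  have := core w0 _ _ _ _ k (- c) hY hS hXD hP hPX.
  have Hw : forall w, Y w <= k * (X w - - c) ^+ 2.
    move=> w; rewrite /Y /ind_ge; case: ifP => h.
      move: h => /idP h.
      have e1 : k * (c + eps) ^+ 2 = 1.
        rewrite /k -exprMn mulVf ?expr1n //; apply: lt0r_neq0; lra.
      have e2 : (c + eps) ^+ 2 <= (X w - - c) ^+ 2.
        rewrite !expr2; nra.
      rewrite -e1; exact: ler_wpM2l.
    by apply: mulr_ge0 => //; apply: sqr_ge0.
  move=> /(_ Hw); rewrite sqrrN => H.
  have Hk2 : k * (c ^+ 2 + u) = u / (u + eps ^+ 2).
    rewrite /k /c; apply: alg_id; lra.
  have : k * (c ^+ 2 + - P (sqg X)) <= k * (c ^+ 2 + u) by apply: ler_wpM2l => //; lra.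
  lra.
Qed.
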